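(* Let $X$ be a supertropical semiring. Let $n,j,i_1,\dots,i_j,d_1,\dots,d_j\in\mathbb{N}_{\ge1}$ with $i_1<i_2<\dots<i_j\le n$ and $d_1>d_2>\dots>d_j$, and set $i_0=0$. Then for all $x_1,\dots,x_n\in X$, $$\mathrm{Minsym}_n\Big(\prod_{t=1}^{j}(x_{i_{t-1}+1}\cdots x_{i_t})^{d_t}\Big)=e_{i_j}(x_1,\dots,x_n)^{d_j}\cdot\mathrm{Minsym}_n\Big(\prod_{t=1}^{j-1}(x_{i_{t-1}+1}\cdots x_{i_t})^{d_t-d_j}\Big).$$
   Context: A semiring $(X,+,0,\cdot)$: $(X,+,0)$ commutative monoid, $(X,\cdot)$ semigroup, distributivity, $0$ absorbing. $\nu(x)=x+x$. A supertropical semiring is a unital commutative semiring with $2=4$ (where $n=1+\dots+1$), such that $a+b\in\{a,b\}$ whenever $\nu(a)\ne\nu(b)$, and $a+b=\nu(a)$ whenever $\nu(a)=\nu(b)$. For a pure monomial $m=x_1^{c_1}\cdots x_n^{c_n}$ (coefficient $1$), its minimal symmetrization $\mathrm{Minsym}_n(m)$ is the sum, with each term taken exactly once, of the distinct monomials in $\{x_{\sigma(1)}^{c_1}\cdots x_{\sigma(n)}^{c_n}:\sigma\in S_n\}$ (monomials equal up to reordering of factors are identified); the minimal symmetrization of the empty monomial is $1$. $e_k(x_1,\dots,x_n)$ is the sum of all products of $k$ distinct variables. *)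

(* Defs.v *)
From HB Require Import structures.
From mathcomp Require Import all_boot all_order all_fingroup all_algebra.
Set Implicit Arguments. Unset Strict Implicit. Unset Printing Implicit Defensive.
Import GRing.Theory.
Local Open Scope ring_scope.

Definition nu (X : comPzSemiRingType) (x : X) : X := x + x.

Definition supertropical (X : comPzSemiRingType) : Prop :=
  [/\ (2%:R : X) = 4%:R,
      (forall a b : X, nu a <> nu b -> a + b = a \/ a + b = b) &
      (forall a b : X, nu a = nu b -> a + b = nu a)].

Definition monom (X : comPzSemiRingType) (n : nat) (c : {ffun 'I_n -> nat})
  (x : 'I_n -> X) : X := \prod_(k < n) x k ^+ c k.

(* Minimal symmetrization: sum, each taken once, of the distinct monomials
   x_{s(1)}^{c_1} ... x_{s(n)}^{c_n}, s in S_n; the exponent of x_k in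
   that monomial is c_{s^-1(k)}. *)
Definition Minsym (X : comPzSemiRingType) (n : nat) (c : {ffun 'I_n -> nat})
  (x : 'I_n -> X) : X :=
  \sum_(e <- undup [seq [ffun k => c ((s^-1)%g k)] | s : {perm 'I_n}])
     monom e x.

Definition elem_sym (X : comPzSemiRingType) (n k : nat) (x : 'I_n -> X) : X :=
  \sum_(S : {set 'I_n} | #|S| == k) \prod_(m in S) x m.

(* Exponent vector of prod_{t=1}^{j} (x_{i_{t-1}+1} ... x_{i_t})^{d_t}
   (variables 0-indexed: x_{k+1} is x k, so x_{k+1} lies in block t iff
   i_{t-1} <= k < i_t). *)
Definition block_exp (n j : nat) (i d : nat -> nat) : {ffun 'I_n -> nat} :=
  [ffun k : 'I_n => (\sum_(1 <= t < j.+1 | (i t.-1 <= k < i t)%N) d t)%N].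

(* Main.v *)
Require Import Defs.
From HB Require Import structures.
From mathcomp Require Import all_boot all_order all_fingroup all_algebra.
From mathcomp Require Import zify.
Set Implicit Arguments. Unset Strict Implicit. Unset Printing Implicit Defensive.
Import GRing.Theory.
Local Open Scope ring_scope.


Section Comb.
Variable n : nat.
Local Notation V := {ffun 'I_n -> nat}.

Definition orb (c : V) : seq V :=
  undup [seq [ffun k => c ((s^-1)%g k)] | s : {perm 'I_n}].
Definition vals (u : V) := [seq u i | i <- enum 'I_n].
Definition supp (u : V) : {set 'I_n} := [set m | u m != 0%N].
Definition ind (T : {set 'I_n}) : V := [ffun m => nat_of_bool (m \in T)].
Definition addf (u v : V) : V := [ffun m => (u m + v m)%N].
Definition predf (u : V) : V := [ffun m => (u m).-1].

Lemma perm_vals_perm (u : V) (p : {perm 'I_n}) :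
  perm_eq (vals [ffun k => u (p k)]) (vals u).
Proof.
rewrite /vals.
have -> : [seq [ffun k => u (p k)] i | i <- enum 'I_n] = [seq u i | i <- [seq p i | i <- enum 'I_n]].
  by rewrite -[in RHS]map_comp; apply: eq_map => i; rewrite /= ffunE.
apply: perm_map; apply: uniq_perm.
- by rewrite map_inj_uniq ?enum_uniq //; apply: perm_inj.
- exact: enum_uniq.
- move=> i; rewrite mem_enum; apply/mapP; exists ((p^-1)%g i); first by rewrite mem_enum.
  by rewrite permKV.
Qed.

Lemma mem_orb (u c : V) : (u \in orb c) = perm_eq (vals u) (vals c).
Proof.
apply/idP/idP.
  rewrite mem_undup => /mapP [s _ ->].
  exact: (perm_vals_perm c (s^-1)%g).
move=> h.
have h' : perm_eq (vals u) [tuple c i | i < n].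
  by move: h; rewrite /vals /= -val_ord_tuple.
case/tuple_permP: h' => p hp.
have eu : u = [ffun k => c (p k)].
  apply/ffunP => k; rewrite ffunE.
  have : k \in enum 'I_n by rewrite mem_enum.
  move: hp; rewrite /vals /= -val_ord_tuple.
  by move/eq_in_map => e /e ->; rewrite tnth_mktuple.
rewrite /orb mem_undup eu; apply/mapP; exists (p^-1)%g; first by rewrite mem_enum.
by apply/ffunP => k; rewrite !ffunE invgK.
Qed.

Lemma count_sum (T : Type) (P : pred T) (s : seq T) :
  count P s = (\sum_(x <- s) nat_of_bool (P x))%N.
Proof. by elim: s => [|x s IH]; rewrite ?big_nil ?big_cons //= IH. Qed.

Lemma count_vals (a : pred nat) (u : V) :
  count a (vals u) = (\sum_(m < n) nat_of_bool (a (u m)))%N.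
Proof. by rewrite /vals count_map count_sum big_enum. Qed.

Lemma card_supp (u : V) : #|supp u| = count (fun y => y != 0%N) (vals u).
Proof.
rewrite count_vals /supp -sum1_card.
by rewrite big_mkcond; apply: eq_bigr => m _; rewrite inE; case: (u m != 0%N).
Qed.

Lemma count_ind (a : pred nat) (T : {set 'I_n}) (u : V) :
  supp u \subset T ->
  (count a (vals (addf (ind T) u)) + #|~: T| * a 1%N
   = count (fun y => a y.+1) (vals u) + #|~: T| * a 0%N)%N.
Proof.
move=> /subsetP hs.
have u0 m : m \notin T -> u m = 0%N.
  move=> hm; apply/eqP; apply: contraR hm => h; apply: hs; by rewrite inE.
rewrite !count_vals (bigID (fun m => m \in T)) /=
  [X in (_ = X + _)%N](bigID (fun m => m \in T)) /=.
have e1 : (\sum_(i < n | i \in T) nat_of_bool (a (addf (ind T) u i)) =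
          \sum_(i < n | i \in T) nat_of_bool (a (u i).+1))%N.
  by apply: eq_bigr => m hm; rewrite !ffunE hm.
have e2 : (\sum_(i < n | i \notin T) nat_of_bool (a (addf (ind T) u i)) =
          #|~: T| * a 0%N)%N.
  rewrite -sum_nat_const; apply: eq_big => m; first by rewrite inE.
  by move=> hm; rewrite !ffunE (negbTE hm) u0.
have e3 : (\sum_(i < n | i \notin T) nat_of_bool (a (u i).+1) =
          #|~: T| * a 1%N)%N.
  rewrite -sum_nat_const; apply: eq_big => m; first by rewrite inE.
  by move=> hm; rewrite u0.
by rewrite e1 e2 e3 -!addnA (addnC (_ * a 0%N)%N).
Qed.

Lemma addf_ind_pred (c : V) : c = addf (ind (supp c)) (predf c).
Proof.
by apply/ffunP => m; rewrite !ffunE inE; case: (c m).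
Qed.

Lemma supp_pred_sub (c : V) : supp (predf c) \subset supp c.
Proof. by apply/subsetP => m; rewrite !inE ffunE; case: (c m). Qed.

Lemma mem0 (c : V) (T : {set 'I_n}) (v : V) :
  #|T| = #|supp c| -> v \in orb (predf c) -> supp v \subset T ->
  addf (ind T) v \in orb c.
Proof.
move=> hT; rewrite !mem_orb => /seq.permP hv hs.
apply/seq.permP => a.
have hC : #|~: T| = #|~: supp c|.
  by have := cardsC T; have := cardsC (supp c); lia.
apply: (@addIn (#|~: T| * a 1%N)).
rewrite count_ind // hv hC -(count_ind a (supp_pred_sub c)) -addf_ind_pred.
by [].
Qed.
End Comb.


Section Alg.
Variable X : comPzSemiRingType.
Hypothesis HX : supertropical X.

Definition ab (s t : X) := s + t = s.

Lemma ab_trans s t u : ab s t -> ab t u -> ab s u.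
Proof. by rewrite /ab => h1 h2; rewrite -h1 -addrA h2. Qed.

Lemma ab_addl s r t : ab s t -> ab (r + s) t.
Proof. by rewrite /ab => h; rewrite -addrA h. Qed.

Lemma ab_mul m s t : ab s t -> ab (m * s) (m * t).
Proof. by rewrite /ab => h; rewrite -mulrDr h. Qed.

Lemma ab_split L A R t : L = A + R -> ab A t -> ab L t.
Proof. by rewrite /ab => -> h; rewrite addrAC h. Qed.

Lemma ab_chain (y z : X) : z + y = z ->
  forall p q, ab (z ^+ (p.+1 + q)) (y ^+ p.+1 * z ^+ q).
Proof.
move=> hzy; elim=> [|p IH] q.
  by rewrite /ab add1n exprS expr1 -mulrDl hzy.
apply: (ab_trans (t := y ^+ p.+1 * z ^+ q.+1)).
  by move: (IH q.+1); rewrite addnS addSn.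
have E1 : y ^+ p.+2 * z ^+ q = (y ^+ p.+1 * z ^+ q) * y by rewrite exprSr mulrAC.
have E2 : y ^+ p.+1 * z ^+ q.+1 = (y ^+ p.+1 * z ^+ q) * z by rewrite [z ^+ _.+1]exprSr mulrA.
by rewrite /ab E1 E2 -mulrDr hzy.
Qed.

Lemma two_var (y z : X) a : ab (y ^+ a.+2 + z ^+ a.+2) (y ^+ a.+1 * z).
Proof.
case: HX => H24 H2 H3.
case: (eqVneq (y + y) (z + z)) => hyz.
  have G1 N : y ^+ N + y ^+ N = z ^+ N + z ^+ N.
    elim: N => [|N IH] //.
    rewrite !exprS.
    transitivity (y * (z ^+ N + z ^+ N)); first by rewrite -IH mulrDr.
    by rewrite mulrDr -mulrDl hyz mulrDl.
  have G2 : y ^+ a.+1 * z + y ^+ a.+1 * z = y ^+ a.+2 + y ^+ a.+2.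
    by rewrite -mulrDr -hyz mulrDr -exprSr.
  set g := y ^+ a.+2 + y ^+ a.+2.
  have Hs : y ^+ a.+2 + z ^+ a.+2 = g by apply: H3; rewrite /nu G1.
  have Hg : g + g = g.
    have := congr1 (fun u => u * y ^+ a.+2) H24.
    rewrite !mulr_natl /g => h.
    rewrite -mulr2n -mulr2n -mulrnA; exact: (esym h).
  rewrite /ab Hs; rewrite (H3 g) ?/nu //; by rewrite G2 Hg.
have [h|h] := H2 y z (fun e => negP hyz (introT eqP e)).
  have := ab_chain (y := z) (z := y) h 0 a.+1.
  rewrite add1n expr1 mulrC => hh.
  by rewrite /ab -addrA [_ + y ^+ a.+1 * z]addrC addrA hh.
have := ab_chain (y := y) (z := z) (etrans (addrC _ _) h) a 1.
rewrite addn1 expr1 => hh.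
by apply: ab_addl.
Qed.


Lemma ab_sum (I : eqType) (r : seq I) (P : pred I) (G : I -> X) s :
  (forall i, i \in r -> P i -> ab s (G i)) -> ab s (\sum_(i <- r | P i) G i).
Proof.
elim: r => [|i r IH] h; first by rewrite big_nil /ab addr0.
rewrite big_cons; case: ifP => hP.
  rewrite /ab addrA (h i) ?mem_head //; apply: IH => j hj; apply: h.
  by rewrite in_cons hj orbT.
by apply: IH => j hj; apply: h; rewrite in_cons hj orbT.
Qed.

Lemma absorb_big (V W : eqType) (F : V -> X) (O : seq V) (Q : seq W) (f : W -> V) :
  uniq O -> uniq Q ->
  {in Q &, forall q1 q2, f q1 \in O -> f q1 = f q2 -> q1 = q2} ->
  (forall v, v \in O -> exists2 q, q \in Q & f q = v) ->
  (forall q, q \in Q -> f q \notin O -> ab (\sum_(v <- O) F v) (F (f q))) ->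
  \sum_(q <- Q) F (f q) = \sum_(v <- O) F v.
Proof.
move=> uO uQ finj fsurj fab.
rewrite (bigID (fun q => f q \in O)) /=.
have -> : \sum_(q <- Q | f q \in O) F (f q) = \sum_(v <- O) F v.
  rewrite -big_filter -(big_map f predT F); apply: perm_big.
  apply: uniq_perm => //.
    rewrite map_inj_in_uniq ?filter_uniq // => q1 q2.
    rewrite !mem_filter => /andP [h1 q1Q] /andP [_ q2Q] e.
    exact: finj.
  move=> v; apply/mapP/idP => [[q]|vO]; first by rewrite mem_filter => /andP [h _] ->.
  have [q qQ fq] := fsurj v vO; exists q => //; by rewrite mem_filter fq vO.
by apply: ab_sum => q qQ hq; apply: fab.
Qed.

Lemma ab_comb (V : eqType) (F : V -> X) (O : seq V) (a b : V) t :
  uniq O -> a != b ->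
  (a \in O \/ ab (\sum_(v <- O) F v) (F a)) ->
  (b \in O \/ ab (\sum_(v <- O) F v) (F b)) ->
  ab (F a + F b) t -> ab (\sum_(v <- O) F v) t.
Proof.
move=> uO nab ha hb hab.
set L := \sum_(v <- O) F v.
suff [R hR] : exists R, L = F a + F b + R by apply: (ab_split hR).
case: ha => [aO|ha]; case: hb => [bO|hb].
- have bO' : b \in [seq v <- O | v != a] by rewrite mem_filter eq_sym nab.
  exists (\sum_(v <- [seq v <- O | v != a] | v != b) F v).
  rewrite /L (bigD1_seq a) // -big_filter (bigD1_seq b) ?filter_uniq //.
  exact: addrA.
- exists (\sum_(v <- O | v != a) F v).
  rewrite -[LHS]hb (bigD1_seq a) //; exact: addrAC.
- exists (\sum_(v <- O | v != b) F v).
  rewrite -[LHS]ha (bigD1_seq b) //.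
  by rewrite -[F a + _]addrC; exact: addrAC.
- exists L.
  by rewrite /L -{1}hb -{1}ha [RHS]addrC addrA.
Qed.
End Alg.

Section Main.
Variable X : comPzSemiRingType.
Hypothesis HX : supertropical X.
Variable n : nat.
Variable x : 'I_n -> X.
Local Notation V := {ffun 'I_n -> nat}.

Lemma monom_addf (u v : V) : monom (addf u v) x = monom u x * monom v x.
Proof. by rewrite /monom -big_split; apply: eq_bigr => m _; rewrite ffunE exprD. Qed.

Lemma monom_ind (T : {set 'I_n}) : monom (ind T) x = \prod_(m in T) x m.
Proof.
rewrite /monom [RHS]big_mkcond; apply: eq_bigr => m _; rewrite ffunE.
by case: (m \in T); rewrite ?expr1 ?expr0.
Qed.

Lemma monom_split (u : V) k l : k != l ->
  monom u x = x k ^+ u k * (x l ^+ u l *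
     \prod_(m < n | (m != k) && (m != l)) x m ^+ u m).
Proof.
move=> kl; rewrite /monom (bigD1 k) //= (bigD1 l) //= eq_sym //.
Qed.

Lemma supp_orb (u c : V) : u \in orb c -> #|supp u| = #|supp c|.
Proof. by rewrite mem_orb => /seq.permP h; rewrite !card_supp h. Qed.


Lemma exch (c : V) : forall N (T : {set 'I_n}) (v : V),
  (#|supp v :\: T| <= N)%N -> #|T| = #|supp c| -> v \in orb (predf c) ->
  ~~ (supp v \subset T) ->
  ab (\sum_(u <- orb c) monom u x) (monom (addf (ind T) v) x).
Proof.
elim=> [|N IH] T v hN hT hv hs.
  case/subsetPn: hs => k hk hkT.
  have : (0 < #|supp v :\: T|)%N by apply/card_gt0P; exists k; rewrite inE hkT hk.
  lia.
case/subsetPn: hs => k hk hkT.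
have hvc : (#|supp v| <= #|supp c|)%N.
  rewrite (supp_orb hv); apply: subset_leq_card; exact: supp_pred_sub.
have [l hlT hlv] : exists2 l, l \in T & l \notin supp v.
  case: (boolP [exists l in T, l \notin supp v]) => [/exists_inP //|/exists_inPn hall].
  have sub : k |: T \subset supp v.
    apply/subsetP => m; rewrite in_setU1 => /orP [/eqP -> //|hm].
    by have := hall m hm; rewrite negbK.
  have := subset_leq_card sub; rewrite cardsU1 hkT; lia.
have hkl : k != l by apply: contraNneq hkT => ->.
set T2 := k |: (T :\ l).
have hT2 : #|T2| = #|supp c|.
  rewrite cardsU1 in_setD1 (negbTE hkT) andbF /=.
  by have := cardsD1 l T; rewrite hlT => e; rewrite -hT e.
set v3 : V := [ffun m => v (tperm k l m)].
have hv3 : v3 \in orb (predf c).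
  rewrite mem_orb; apply: perm_trans (perm_vals_perm v (tperm k l)) _.
  by rewrite -mem_orb.
move: hlv; rewrite inE negbK => /eqP hvl.
move: hk; rewrite inE => hk.
have P2 : (#|supp v :\: T2| < #|supp v :\: T|)%N.
  apply: proper_card; apply/properP; split.
    apply/subsetP => m; rewrite !inE.
    case: (m =P k) => [->|_] //=; case: (m =P l) => [->|_] //=.
    by rewrite hvl eqxx andbF.
  by exists k; rewrite !inE ?eqxx ?hk ?hkT.
have P3 : (#|supp v3 :\: T| < #|supp v :\: T|)%N.
  apply: proper_card; apply/properP; split.
    apply/subsetP => m; rewrite !inE ffunE.
    case: tpermP => [->|->|_ _] //.
      by rewrite hvl eqxx andbF.
    by rewrite hlT.
  by exists k; rewrite !inE ?ffunE ?tpermL ?hvl ?eqxx ?hk ?hkT ?andbF.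
have side (T' : {set 'I_n}) (v' : V) : #|T'| = #|supp c| -> v' \in orb (predf c) ->
    (#|supp v' :\: T'| <= N)%N ->
    (addf (ind T') v' \in orb c) \/
    ab (\sum_(u <- orb c) monom u x) (monom (addf (ind T') v') x).
  move=> h1 h2 h3; case: (boolP (supp v' \subset T')) => h.
    by left; apply: mem0.
  by right; apply: IH.
apply: (ab_comb (F := fun u => monom u x) (a := addf (ind T2) v) (b := addf (ind T) v3)).
- exact: undup_uniq.
- apply/eqP => e; have := congr1 (fun f : V => f l) e.
  by rewrite !ffunE tpermR hvl !inE eqxx hlT /= eq_sym (negbTE hkl).
- apply: side => //; lia.
- apply: side => //; lia.
rewrite !(monom_split _ hkl).
set M := \prod_(m < n | (m != k) && (m != l)) x m ^+ addf (ind T) v m.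
have eM2 : \prod_(m < n | (m != k) && (m != l)) x m ^+ addf (ind T2) v m = M.
  apply: eq_bigr => m /andP [mk ml].
  by rewrite !ffunE !inE (negbTE mk) (negbTE ml).
have eM3 : \prod_(m < n | (m != k) && (m != l)) x m ^+ addf (ind T) v3 m = M.
  apply: eq_bigr => m /andP [mk ml].
  by rewrite !ffunE tpermD // eq_sym.
rewrite eM2 eM3 !ffunE tpermL tpermR hvl !inE eqxx (negbTE hkT) hlT /=.
rewrite eq_sym (negbTE hkl) /=.
move: hk; case: (v k) => [//|a] _.
rewrite !add0n addn0 expr0 !mul1r.
have := ab_mul M (two_var HX (x k) (x l) a).
rewrite mulrDr.
have -> : x k ^+ a.+1 * (x l ^+ 1 * M) = M * (x k ^+ a.+1 * x l).
  by rewrite expr1 mulrA mulrC.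
rewrite mulrA [M * _]mulrC [M * _]mulrC; by rewrite eqxx /= expr0 mul1r !add1n.
Qed.

Lemma vals_predf (u : V) : vals (predf u) = [seq y.-1 | y <- vals u].
Proof. by rewrite /vals -map_comp; apply: eq_map => m; rewrite /= ffunE. Qed.

Lemma sub_supp_addf (T : {set 'I_n}) (v : V) : T \subset supp (addf (ind T) v).
Proof. by apply/subsetP => m hm; rewrite inE !ffunE hm. Qed.

Lemma core (c : V) : Minsym c x = elem_sym #|supp c| x * Minsym (predf c) x.
Proof.
set r := #|supp c|.
set P := [pred T : {set 'I_n} | #|T| == r].
have eE : elem_sym r x = \sum_(T <- enum P) monom (ind T) x.
  rewrite /elem_sym big_enum /=; apply: eq_bigr => T _; by rewrite monom_ind.
rewrite eE /Minsym mulr_suml /=; symmetry.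
under eq_bigr do rewrite mulr_sumr.
rewrite -(big_allpairs (F := fun q : {set 'I_n} * V => monom (ind q.1) x * monom q.2 x)).
under eq_bigr do rewrite -monom_addf.
set Q := [seq (i1, i2) | i1 <- enum P, i2 <- orb (predf c)].
have memQ q : q \in Q -> #|q.1| = r /\ q.2 \in orb (predf c).
  case/allpairsP => -[T v] /= [hT hv ->]; split => //.
  by move: hT; rewrite mem_enum inE => /eqP.
apply: (absorb_big (F := fun u => monom u x) (f := fun q => addf (ind q.1) q.2)).
- exact: undup_uniq.
- apply: allpairs_uniq; rewrite ?enum_uniq ?undup_uniq //.
  by move=> [? ?] [? ?] _ _.
- move=> [T1 v1] [T2 v2] /memQ [/= h1 _] /memQ [/= h2 _] /= hin e.
  have hin2 : addf (ind T2) v2 \in orb c by rewrite -e.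
  have ET (T : {set 'I_n}) v : #|T| = r -> addf (ind T) v \in orb c ->
      T = supp (addf (ind T) v).
    move=> hT hw; apply/eqP; rewrite eqEcard sub_supp_addf /=.
    by rewrite (supp_orb hw) hT.
  have eT : T1 = T2 by rewrite (ET _ _ h1 hin) (ET _ _ h2 hin2) e.
  subst T2; congr (_, _); apply/ffunP => m.
  by have := congr1 (fun g : V => g m) e; rewrite !ffunE => /addnI.
- move=> v hv; exists (supp v, predf v); last by rewrite /= -addf_ind_pred.
  apply: allpairs_f; first by rewrite mem_enum inE (supp_orb hv).
  rewrite mem_orb !vals_predf; apply: perm_map; by rewrite -mem_orb.
- move=> [T v] /memQ [/= hT hv] /= hnot.
  case: (boolP (supp v \subset T)) => hs.
    by rewrite (mem0 hT hv hs) in hnot.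
  exact: (exch (leqnn _) hT hv hs).
Qed.

Lemma iter_core (c : V) (S : {set 'I_n}) (dm : nat) :
  (forall k, k \in S -> (dm <= c k)%N) -> (forall k, k \notin S -> c k = 0%N) ->
  forall m, (m <= dm)%N ->
  Minsym c x = elem_sym #|S| x ^+ m * Minsym [ffun k => (c k - m)%N] x.
Proof.
move=> hS hnS; elim=> [|m IH] hm.
  rewrite expr0 mul1r; congr (Minsym _ x); apply/ffunP => k; by rewrite ffunE subn0.
rewrite IH ?(ltnW hm) // (core [ffun k => (c k - m)%N]).
have -> : supp [ffun k => (c k - m)%N] = S.
  apply/setP => k; rewrite inE ffunE; case: (boolP (k \in S)) => h.
    by rewrite subn_eq0 -ltnNge; apply: leq_trans hm (hS k h).
  by rewrite hnS.
have -> : predf [ffun k => (c k - m)%N] = [ffun k => (c k - m.+1)%N].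
  by apply/ffunP => k; rewrite !ffunE subnS.
by rewrite exprSr mulrA.
Qed.

End Main.

Section Nat.
Local Open Scope nat_scope.
Lemma sum_single (F : nat -> nat) (P : pred nat) (a b t0 : nat) :
  (forall t, a <= t < b -> P t = (t == t0)) ->
  \sum_(a <= t < b | P t) F t = if a <= t0 < b then F t0 else 0.
Proof.
move=> hP; rewrite -big_filter.
rewrite (@eq_in_filter _ P (pred1 t0)); last first.
  by move=> t; rewrite mem_index_iota => /hP.
case: ifP => h.
  by rewrite filter_pred1_uniq ?iota_uniq ?mem_index_iota // big_seq1.
rewrite (@eq_in_filter _ _ pred0) ?filter_pred0 ?big_nil //.
move=> t; rewrite mem_index_iota /= => ht; apply/eqP => e; subst t.
by rewrite ht in h.
Qed.

Lemma imono (j : nat) (i : nat -> nat) : (1 <= j) -> i 0 = 0 ->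
  (forall t, 1 <= t <= j -> 1 <= i t) ->
  (forall t, 1 <= t < j -> i t < i t.+1) ->
  forall t1 t2, t1 < t2 <= j -> i t1 < i t2.
Proof.
move=> hj hi0 hi1 hinc.
have step t : t < j -> i t < i t.+1.
  case: t => [|t] ht; first by rewrite hi0; apply: hi1; lia.
  by apply: hinc; lia.
move=> t1; elim=> [|t2 IH] //= h.
case: (ltnP t1 t2) => h1.
  apply: ltn_trans (IH _) (step _ _); lia.
have -> : t1 = t2 by lia.
apply: step; lia.
Qed.

Lemma dmono (j : nat) (d : nat -> nat) :
  (forall t, 1 <= t < j -> d t.+1 < d t) ->
  forall t, 1 <= t <= j -> d j <= d t.
Proof.
move=> hdec t ht.
have : forall k t, t + k = j -> 1 <= t -> d j <= d t.
  elim=> [|k IH] t' e h; first by rewrite -e addn0.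
  apply: leq_trans (IH t'.+1 _ _) _; try lia.
  apply: ltnW; apply: hdec; lia.
by move/(_ (j - t) t); apply; lia.
Qed.

Lemma block_in (j : nat) (i : nat -> nat) (k : nat) : i 0 = 0 ->
  forall J, J <= j -> k < i J -> exists2 t0, 1 <= t0 <= J & i t0.-1 <= k < i t0.
Proof.
move=> hi0; elim=> [|J IH] hJ hk; first by rewrite hi0 in hk.
case: (ltnP k (i J)) => h.
  by have [t0 ht0 h'] := IH (ltnW hJ) h; exists t0 => //; lia.
by exists J.+1 => //=; rewrite h hk.
Qed.

Lemma block_uniq (j : nat) (i : nat -> nat) (k t0 : nat) :
  (forall t1 t2, t1 < t2 <= j -> i t1 < i t2) ->
  1 <= t0 <= j -> i t0.-1 <= k < i t0 ->
  forall t, 1 <= t <= j -> (i t.-1 <= k < i t) = (t == t0).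
Proof.
move=> hm ht0 hk t ht.
have hm' t1 t2 : t1 <= t2 <= j -> i t1 <= i t2.
  move=> h; case: (ltngtP t1 t2) => h'; [apply: ltnW; apply: hm| lia|by rewrite h'].
  lia.
case: (ltngtP t t0) => h.
- have : i t <= i t0.-1 by apply: hm'; lia.
  move=> h2; apply/negP => /andP [h3 h4]; lia.
- have : i t0 <= i t.-1 by apply: hm'; lia.
  move=> h2; apply/negP => /andP [h3 h4]; lia.
- by subst t.
Qed.

End Nat.

Theorem lemma5p7 (X : comPzSemiRingType) (HX : supertropical X)
  (n j : nat) (i d : nat -> nat)
  (hn : (1 <= n)%N) (hj : (1 <= j)%N)
  (hi0 : i 0%N = 0%N)
  (hi1 : forall t, (1 <= t <= j)%N -> (1 <= i t)%N)
  (hd1 : forall t, (1 <= t <= j)%N -> (1 <= d t)%N)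
  (hinc : forall t, (1 <= t < j)%N -> (i t < i t.+1)%N)
  (hij : (i j <= n)%N)
  (hdec : forall t, (1 <= t < j)%N -> (d t.+1 < d t)%N)
  (x : 'I_n -> X) :
  Minsym (block_exp n j i d) x =
  elem_sym (i j) x ^+ d j *
    Minsym (block_exp n j.-1 i (fun t => (d t - d j)%N)) x.
Proof.
set c := block_exp n j i d.
set S := [set k : 'I_n | (k < i j)%N].
have hm := imono hj hi0 hi1 hinc.
have hdm := dmono hdec.
have hle t : (1 <= t <= j)%N -> (i t <= i j)%N.
  move=> ht; case: (ltngtP t j) => h; [apply: ltnW; apply: hm; lia|lia|by rewrite h].
have cin (k : 'I_n) : (k < i j)%N -> exists t0, [/\ (1 <= t0 <= j)%N, c k = d t0 &
    block_exp n j.-1 i (fun t => d t - d j)%N k = (d t0 - d j)%N].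
  move=> hk; have [t0 ht0 hk0] := block_in hi0 (leqnn j) hk.
  have hu := block_uniq hm ht0 hk0.
  exists t0; split => //; rewrite ffunE.
  - rewrite (sum_single _ (t0 := t0)); first by rewrite ifT //; lia.
    by move=> t ht; apply: hu; lia.
  - rewrite (prednK hj) (sum_single _ (t0 := t0)); last by move=> t ht; apply: hu; lia.
    case: ifP => // h.
    have e : t0 = j by move/negbT: h; lia.
    by rewrite e subnn.
have cout (k : 'I_n) : ~~ (k < i j)%N ->
    c k = 0%N /\ block_exp n j.-1 i (fun t => d t - d j)%N k = 0%N.
  move=> hk; rewrite !ffunE; split; rewrite big_nat_cond big1 // => t
    /andP [/andP [h1 h2] /andP [h3 h4]]; exfalso; have := hle t; lia.
have hS k : k \in S -> (d j <= c k)%N.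
  by rewrite inE => /cin [t0 [ht0 -> _]]; apply: hdm.
have hnS k : k \notin S -> c k = 0%N.
  by rewrite inE => /cout [].
have cardS : #|S| = i j.
  have -> : S = [set widen_ord hij m | m : 'I_(i j)].
    apply/setP => k; rewrite inE; apply/idP/imsetP => [hk|[m _ ->]] //=.
    by exists (Ordinal hk) => //; apply: val_inj.
  rewrite card_imset ?card_ord // => a b /(congr1 val) /= e; exact: val_inj.
rewrite (iter_core HX x hS hnS (leqnn (d j))) cardS.
congr (_ * Minsym _ x); apply/ffunP => k; rewrite ffunE.
case: (boolP (k < i j)%N) => hk.
  by have [t0 [_ -> ->]] := cin k hk.
by have [-> ->] := cout k hk.
Qed.
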